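(* For integers $n,m\geq 1$, the flip graph $\mathcal{T}(C(2m,2n+1))$ of the quadriculated cylinder $C(2m,2n+1)$ is connected.
   Context: The quadriculated cylinder $C(m,n)$ is obtained from an $m\times n$ chessboard ($m$ rows each of $n$ unit squares) by identifying its left and right sides. A domino is the union of two adjacent unit squares; a tiling is a collection of dominoes with disjoint interiors whose union is the region. A flip replaces two parallel dominoes forming a $2\times 2$ block by the other two dominoes covering that block. The flip graph has the tilings as vertices, two tilings being adjacent iff one is obtained from the other by a single flip. *)

(* Defs.v *)
From mathcomp Require Import all_boot.
From Stdlib Require Import Relations.
Set Implicit Arguments. Unset Strict Implicit. Unset Printing Implicit Defensive.

(* Unit squares of the quadriculated cylinder C(r,c): (row, column),
   rows 0..r-1, columns 0..c-1 taken cyclically (left/right sides identified). *)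
Definition square (r c : nat) := ('I_r * 'I_c)%type.

Definition col_next (c : nat) (j : 'I_c) : 'I_c := ordS j.

Definition adjacent (r c : nat) (a b : square r c) : bool :=
  (a != b) &&
  (((a.1 == b.1) && ((b.2 == col_next a.2) || (a.2 == col_next b.2))) ||
   ((a.2 == b.2) && (((a.1 : nat).+1 == b.1) || ((b.1 : nat).+1 == a.1)))).

Definition domino (r c : nat) (d : {set square r c}) : Prop :=
  exists a b : square r c, adjacent a b /\ d = [set a; b].

Definition tiling (r c : nat) (t : {set {set square r c}}) : Prop :=
  partition t [set: square r c] /\ forall d, d \in t -> domino d.

Definition flip (r c : nat) (t1 t2 : {set {set square r c}}) : Prop :=
  exists (i i' : 'I_r) (j : 'I_c),
    (i' : nat) = (i : nat).+1 /\
    let a := (i, j) in let b := (i, col_next j) in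
    let a' := (i', j) in let b' := (i', col_next j) in
    let H1 := [set a; b] in let H2 := [set a'; b'] in
    let V1 := [set a; a'] in let V2 := [set b; b'] in
    ((H1 \in t1 /\ H2 \in t1 /\ t2 = (t1 :\: [set H1; H2]) :|: [set V1; V2]) \/
     (V1 \in t1 /\ V2 \in t1 /\ t2 = (t1 :\: [set V1; V2]) :|: [set H1; H2])).

Definition flip_edge (r c : nat) (t1 t2 : {set {set square r c}}) : Prop :=
  tiling t1 /\ tiling t2 /\ flip t1 t2.

Definition flip_graph_connected (r c : nat) : Prop :=
  (exists t : {set {set square r c}}, tiling t) /\
  forall t1 t2 : {set {set square r c}}, tiling t1 -> tiling t2 ->
    clos_refl_trans _ (@flip_edge r c) t1 t2.

(* Main.v *)
Require Import Defs.
From Stdlib Require Import Relations.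
From mathcomp Require Import all_boot zify.
Set Implicit Arguments. Unset Strict Implicit. Unset Printing Implicit Defensive.

Lemma ord_eqE n (a b : 'I_n) : (a == b) = ((a : nat) == b).
Proof. by apply/eqP/eqP => [->|/val_inj]. Qed.

Section Cyl.
Variables r c : nat.
Hypothesis hc3 : 3 <= c.
Hypothesis hcodd : odd c.
Hypothesis hreven : ~~ odd r.

Lemma valS (y : 'I_c) : (col_next y : nat) = if y.+1 == c then 0 else y.+1.
Proof.
rewrite /col_next /ordS /=. case: eqP => [->|h]; first by rewrite modnn.
rewrite modn_small //. have := ltn_ord y. lia.
Qed.

Lemma valP (y : 'I_c) : (ord_pred y : nat) = if (y : nat) == 0 then c.-1 else y.-1.
Proof.
have := congr1 (@nat_of_ord _) (ord_predK y). rewrite [(ordS _ : nat)]valS.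
have := ltn_ord (ord_pred y). have := ltn_ord y.
case: ifP => /eqP h1; case: ifP => /eqP h2; lia.
Qed.

Ltac norm := rewrite ?in_set2 ?xpair_eqE ?ord_eqE ?valS ?valP /=.
Ltac cases := repeat (match goal with H : context [if _ then _ else _] |- _ => move: H | |- _ => case: ifP => /eqP ? end).

Notation sq := (square r c).
Notation tl := {set {set sq}}.
Definition reach (t1 t2 : tl) := clos_refl_trans _ (@flip_edge r c) t1 t2.

Lemma tile_dom (t : tl) D : tiling t -> D \in t -> domino D.
Proof. by case=> _ h; apply: h. Qed.

Lemma tile_cover (t : tl) s : tiling t -> exists2 D, D \in t & s \in D.
Proof.
case=> /and3P [/eqP hc _ _] _.
have : s \in cover t by rewrite hc inE.
by case/bigcupP=> D hD hs; exists D.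
Qed.

Lemma tile_uniq (t : tl) D1 D2 s : tiling t -> D1 \in t -> D2 \in t ->
  s \in D1 -> s \in D2 -> D1 = D2.
Proof.
case=> /and3P [_ /trivIsetP ht _] _ h1 h2 s1 s2.
case: (eqVneq D1 D2) => // hne.
by rewrite (disjointFr (ht _ _ h1 h2 hne) s1) in s2.
Qed.

Lemma mk_tiling (t : tl) : (forall D, D \in t -> domino D) ->
  (forall s, exists2 D, D \in t & s \in D) ->
  (forall D1 D2 s, D1 \in t -> D2 \in t -> s \in D1 -> s \in D2 -> D1 = D2) ->
  tiling t.
Proof.
move=> hd hc hu; split => //; apply/and3P; split.
- apply/eqP/setP => s; rewrite inE; apply/bigcupP.
  by have [D hD hs] := hc s; exists D.
- apply/trivIsetP => A B hA hB hne; apply/pred0P => s /=; apply/negbTE/negP => /andP [sA sB].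
  by rewrite (hu _ _ _ hA hB sA sB) eqxx in hne.
- apply/negP => h0; have [a [b [_ e]]] := hd _ h0.
  by have := set21 a b; rewrite -e inE.
Qed.

Lemma swap_tiling (t : tl) X1 X2 Y1 Y2 : tiling t -> X1 \in t -> X2 \in t ->
  X1 :|: X2 = Y1 :|: Y2 -> (forall s, s \in Y1 -> s \in Y2 -> False) ->
  domino Y1 -> domino Y2 -> tiling ((t :\: [set X1; X2]) :|: [set Y1; Y2]).
Proof.
move=> ht h1 h2 e hdis d1 d2.
have inX s : (s \in X1) || (s \in X2) = (s \in Y1) || (s \in Y2).
  by rewrite -!in_setU e.
apply: mk_tiling.
- move=> D; rewrite !inE => /orP [/andP [_ hD]|/orP [/eqP->|/eqP->]] //.
  exact: tile_dom hD.
- move=> s; have [D hD hs] := tile_cover s ht.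
  case: (boolP ((D == X1) || (D == X2))) => hX.
  + have : (s \in Y1) || (s \in Y2).
      by rewrite -inX; case/orP: hX => /eqP <-; rewrite hs ?orbT.
    by case/orP => hy; [exists Y1 | exists Y2]; rewrite // !inE eqxx ?orbT.
  + by exists D; rewrite // !inE hX hD.
- have key D s : D \in t -> ~~ ((D == X1) || (D == X2)) -> s \in D ->
      (s \in Y1) || (s \in Y2) -> False.
    move=> hD hX hs; rewrite -inX => /orP [] hx.
    + by rewrite (tile_uniq ht hD h1 hs hx) eqxx in hX.
    + by rewrite (tile_uniq ht hD h2 hs hx) eqxx orbT in hX.
  move=> D1 D2 s; rewrite !inE.
  move=> /orP [/andP [hX1 hD1]|/orP [/eqP e1|/eqP e1]];
  move=> /orP [/andP [hX2 hD2]|/orP [/eqP e2|/eqP e2]]; move=> s1 s2.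
  + exact: tile_uniq ht hD1 hD2 s1 s2.
  + by exfalso; apply: (key D1 s) => //; rewrite -e2 s2.
  + by exfalso; apply: (key D1 s) => //; rewrite -e2 s2 orbT.
  + by exfalso; apply: (key D2 s) => //; rewrite -e1 s1.
  + by rewrite e1 e2.
  + by exfalso; apply: (hdis s); rewrite -?e1 -?e2.
  + by exfalso; apply: (key D2 s) => //; rewrite -e1 s1 orbT.
  + by exfalso; apply: (hdis s); rewrite -?e1 -?e2.
  + by rewrite e1 e2.
Qed.

Lemma col_predK (j : 'I_c) : col_next (ord_pred j) = j.
Proof. exact: ord_predK. Qed.
Lemma col_nextK (j : 'I_c) : ord_pred (col_next j) = j.
Proof. exact: ordSK. Qed.

Definition HD (i : 'I_r) (j : 'I_c) : {set sq} := [set (i,j); (i, col_next j)].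
Definition VD (i i' : 'I_r) (j : 'I_c) : {set sq} := [set (i,j); (i',j)].

Lemma adjE (a b : sq) : adjacent a b = (a != b) &&
  (((a.1 == b.1) && ((b.2 == col_next a.2) || (a.2 == col_next b.2))) ||
   ((a.2 == b.2) && (((a.1 : nat).+1 == b.1) || ((b.1 : nat).+1 == a.1)))).
Proof. by []. Qed.

Lemma domHD i j : domino (HD i j).
Proof. exists (i,j), (i, col_next j); split => //; rewrite adjE; have := ltn_ord j; norm; cases; lia. Qed.

Lemma domVD (i i' : 'I_r) j : (i' : nat) = i.+1 -> domino (VD i i' j).
Proof. move=> h; exists (i,j), (i',j); split => //; rewrite adjE; norm; lia. Qed.

Lemma block_union (i i' : 'I_r) j :
  HD i j :|: HD i' j = VD i i' j :|: VD i i' (col_next j).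
Proof.
apply/setP => s; rewrite !inE.
by case: (s == (i,j)); case: (s == (i, col_next j)); case: (s == (i',j)); case: (s == (i', col_next j)).
Qed.

Lemma flipHV (t : tl) (i i' : 'I_r) (j : 'I_c) : (i' : nat) = i.+1 -> tiling t ->
  HD i j \in t -> HD i' j \in t ->
  flip_edge t ((t :\: [set HD i j; HD i' j]) :|: [set VD i i' j; VD i i' (col_next j)]).
Proof.
move=> hi ht h1 h2; split => //; split.
- apply: swap_tiling => //; [exact: block_union| |exact: domVD|exact: domVD].
  move=> s; rewrite !inE => /orP [] /eqP -> ; have := ltn_ord j; norm; cases; lia.
- exists i, i', j; split => //; left; split => //; split => //.
Qed.

Lemma flipVH (t : tl) (i i' : 'I_r) (j : 'I_c) : (i' : nat) = i.+1 -> tiling t ->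
  VD i i' j \in t -> VD i i' (col_next j) \in t ->
  flip_edge t ((t :\: [set VD i i' j; VD i i' (col_next j)]) :|: [set HD i j; HD i' j]).
Proof.
move=> hi ht h1 h2; split => //; split.
- apply: swap_tiling => //; [by rewrite block_union| |exact: domHD|exact: domHD].
  move=> s; rewrite !inE => /orP [] /eqP -> ; have := ltn_ord j; norm; cases; lia.
- exists i, i', j; split => //; right; split => //; split => //.
Qed.

Lemma setswapK (t : tl) X1 X2 Y1 Y2 : X1 \in t -> X2 \in t -> Y1 \notin t -> Y2 \notin t ->
  t = (((t :\: [set X1;X2]) :|: [set Y1;Y2]) :\: [set Y1;Y2]) :|: [set X1;X2].
Proof.
move=> h1 h2 h3 h4; apply/setP => D; rewrite !inE.
case: (eqVneq D X1) => [->|n1]; first by rewrite h1 !orbT.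
case: (eqVneq D X2) => [->|n2]; first by rewrite h2 !orbT.
case: (eqVneq D Y1) => [->|n3]; first by rewrite (negbTE h3).
case: (eqVneq D Y2) => [->|n4]; first by rewrite (negbTE h4).
by rewrite /= !orbF.
Qed.

Lemma notin_overlap (t : tl) (X Y : {set sq}) s s' : tiling t -> X \in t -> s \in X -> s \in Y ->
  s' \in Y -> s' \notin X -> Y \notin t.
Proof.
move=> ht hX sX sY s'Y s'X; apply/negP => hY.
by move: s'Y; rewrite (tile_uniq ht hY hX sY sX) (negbTE s'X).
Qed.

Lemma flip_edge_sym (t1 t2 : tl) : flip_edge t1 t2 -> flip_edge t2 t1.
Proof.
move=> [ht1 [ht2 [i [i' [j [hi /= [[h1 [h2 e]]|[h1 [h2 e]]]]]]]]].
- have hv1 : VD i i' j \notin t1.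
    apply: (notin_overlap (s := (i,j)) (s' := (i',j)) ht1 h1); rewrite /VD ?inE ?eqxx ?orbT //.
    have := ltn_ord j; norm; cases; lia.
  have hv2 : VD i i' (col_next j) \notin t1.
    apply: (notin_overlap (s := (i,col_next j)) (s' := (i',col_next j)) ht1 h1); rewrite /VD ?inE ?eqxx ?orbT //.
    have := ltn_ord j; norm; cases; lia.
  split => //; split => //; exists i, i', j; split => //; right.
  rewrite e !inE !eqxx ?orbT; split => //; split => //.
  exact: (setswapK h1 h2 hv1 hv2).
- have hv1 : HD i j \notin t1.
    apply: (notin_overlap (s := (i,j)) (s' := (i,col_next j)) ht1 h1); rewrite /HD ?inE ?eqxx ?orbT //.
    have := ltn_ord j; norm; cases; lia.
  have hv2 : HD i' j \notin t1.
    apply: (notin_overlap (s := (i',j)) (s' := (i',col_next j)) ht1 h1); rewrite /HD ?inE ?eqxx ?orbT //.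
    have := ltn_ord j; norm; cases; lia.
  split => //; split => //; exists i, i', j; split => //; left.
  rewrite e !inE !eqxx ?orbT; split => //; split => //.
  exact: (setswapK h1 h2 hv1 hv2).
Qed.

Lemma reach_sym (t1 t2 : tl) : reach t1 t2 -> reach t2 t1.
Proof.
elim => [x y h|x|x y z _ h1 _ h2].
- by apply: rt_step; apply: flip_edge_sym.
- exact: rt_refl.
- exact: rt_trans h2 h1.
Qed.

Lemma adj_sym (a b : sq) : adjacent a b -> adjacent b a.
Proof.
rewrite !adjE => /andP [ne h]; apply/andP; split; first by rewrite eq_sym.
by case/orP: h => /andP [e1 h]; apply/orP; [left|right]; rewrite eq_sym e1 /= orbC.
Qed.

Lemma cover_cases (t : tl) (x : 'I_r) (y : 'I_c) : tiling t ->
  exists2 D, D \in t & ((x,y) \in D) /\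
  (D = HD x y \/ D = HD x (ord_pred y) \/
   (exists x' : 'I_r, (x' : nat) = x.+1 /\ D = VD x x' y) \/
   (exists x' : 'I_r, (x' : nat).+1 = x /\ D = VD x' x y)).
Proof.
move=> ht; have [D hD hs] := tile_cover (x,y) ht; exists D => //; split => //.
have [a [b [hab e]]] := tile_dom ht hD.
have : exists b', adjacent (x,y) b' /\ D = [set (x,y); b'].
  move: hs; rewrite e !inE => /orP [] /eqP hs.
  - by subst a; exists b.
  - by subst b; exists a; rewrite setUC; split => //; apply: adj_sym.
case=> [[b1 b2] []]; rewrite adjE /= => /andP [_ h] ->.
case/orP: h => /andP [/eqP e1 h].
- rewrite -e1; case/orP: h => /eqP e2.
  + by left; rewrite /HD e2.
  + right; left; rewrite /HD e2 ordSK setUC //.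
- rewrite -e1; case/orP: h => /eqP e2.
  + right; right; left; exists b1; split => //.
  + right; right; right; exists b1; rewrite setUC; split => //.
Qed.

Definition meets (D : {set sq}) (l : nat) := [exists s in D, (s.1 : nat) <= l].

Lemma meets2 (p q : sq) l : meets [set p; q] l = ((p.1:nat) <= l) || ((q.1 : nat) <= l).
Proof.
apply/existsP/orP => [[s /andP [hs hl]]|[h|h]].
- by move: hs; rewrite !inE => /orP [] /eqP <-; [left|right].
- by exists p; rewrite set21.
- by exists q; rewrite set22.
Qed.

Lemma meets_mono (D : {set sq}) l l' : meets D l -> l <= l' -> meets D l'.
Proof.
move=> /existsP [s /andP [h1 h2]] hl; apply/existsP; exists s.
by rewrite h1 (leq_trans h2 hl).
Qed.

Lemma neq_meets (D X : {set sq}) l : meets D l -> ~~ meets X l -> D != X.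
Proof. by move=> h1 h2; apply/negP => /eqP e; rewrite e (negbTE h2) in h1. Qed.

Lemma clash (t : tl) D X p q : tiling t -> D \in t -> X \in t -> p \in D -> p \in X ->
  q \in D -> q \notin X -> False.
Proof. by move=> ht hD hX pD pX qD; rewrite -(tile_uniq ht hD hX pD pX) qD. Qed.

Ltac junk := repeat match goal with
  | H : is_true (_ \in _) |- _ => clear H
  | H : is_true (_ != _) |- _ => clear H
  | H : is_true (meets _ _) |- _ => clear H
  | H : forall _, _ |- _ => clear H
  | H : reach _ _ |- _ => clear H
  | H : tiling _ |- _ => clear H
  | H : flip_edge _ _ |- _ => clear H
  | H : _ = _ :> {set _} |- _ => clear H
  end.
Ltac mem := rewrite /HD /VD; norm; junk; cases; lia.
Ltac mt := rewrite /HD /VD meets2 /=; junk; lia.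

Lemma finish (t : tl) (l l1 l2 : 'I_r) (j : 'I_c) : (l1 : nat) = l.+1 -> (l2 : nat) = l1.+1 ->
  tiling t -> HD l j \in t -> VD l1 l2 j \in t -> VD l1 l2 (col_next j) \in t ->
  exists2 t', reach t t' & [/\ tiling t', VD l l1 j \in t', VD l l1 (col_next j) \in t' &
     forall D, D \in t -> D != HD l j -> meets D l -> D \in t'].
Proof.
move=> h1 h2 ht hH hW1 hW2.
have fe1 := flipVH h2 ht hW1 hW2.
set t1 := (t :\: _) :|: _ in fe1.
have ht1 : tiling t1 by case: fe1 => _ [].
have hH1 : HD l j \in t1.
  have a1 : HD l j != VD l1 l2 j by apply: (@neq_meets _ _ l); mt.
  have a2 : HD l j != VD l1 l2 (col_next j) by apply: (@neq_meets _ _ l); mt.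
  by rewrite !inE hH (negbTE a1) (negbTE a2).
have hH2 : HD l1 j \in t1 by rewrite !inE eqxx !orbT.
have fe2 := flipHV h1 ht1 hH1 hH2.
set t2 := (t1 :\: _) :|: _ in fe2.
exists t2.
  by apply: rt_trans (rt_step _ _ _ _ fe1) (rt_step _ _ _ _ fe2).
split.
- by case: fe2 => _ [].
- by rewrite !inE eqxx !orbT.
- by rewrite !inE eqxx !orbT.
move=> D hD hne hm.
have n1 : D != VD l1 l2 j by apply: neq_meets hm _; mt.
have n2 : D != VD l1 l2 (col_next j) by apply: neq_meets hm _; mt.
have n3 : D != HD l1 j by apply: neq_meets hm _; mt.
by rewrite !inE hD (negbTE n1) (negbTE n2) (negbTE n3) (negbTE hne).
Qed.

Lemma proc (k : nat) : forall (t : tl) (l l1 : 'I_r) (j : 'I_c), r - l <= k ->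
  (l1 : nat) = l.+1 -> tiling t -> HD l j \in t ->
  VD l l1 (col_next (col_next j)) \in t ->
  exists2 t', reach t t' & [/\ tiling t', VD l l1 j \in t', VD l l1 (col_next j) \in t' &
     forall D, D \in t -> D != HD l j -> meets D l -> D \in t'].
Proof.
elim: k => [|k IH] t l l1 j hk hl ht hH hV.
  by have := ltn_ord l; lia.
have lj := ltn_ord j.
have [D hD [hsD hcase]] := cover_cases l1 (col_next j) ht.
case: hcase => [e|[e|[[x' [hx' e]]|[x' [hx' e]]]]].
-
  exfalso; apply: (clash (p := (l1, col_next (col_next j))) (q := (l1, col_next j)) ht hD hV).
  + rewrite e; mem.
  + mem.
  + done.
  + mem.
-
  rewrite col_nextK in e; subst D.
  have fe := flipHV hl ht hH hD.
  eexists; first exact: rt_step fe.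
  split; first by case: fe => _ [].
  + by rewrite !inE eqxx !orbT.
  + by rewrite !inE eqxx !orbT.
  move=> D' hD' hne hm.
  have n3 : D' != HD l1 j by apply: neq_meets hm _; mt.
  by rewrite !inE hD' (negbTE n3) (negbTE hne).
-
  subst D.
  have [D' hD' [hsD' hcase']] := cover_cases l1 j ht.
  case: hcase' => [e|[e|[[x'' [hx'' e]]|[x'' [hx'' e]]]]].
  + exfalso; apply: (clash (p := (l1, col_next j)) (q := (l1, j)) ht hD' hD).
    * rewrite e; mem.
    * mem.
    * done.
    * mem.
  +
    subst D'.
    have hV' : VD l1 x' (col_next (col_next (ord_pred j))) \in t by rewrite col_predK.
    have [t1 r1 [ht1 hv1 hv2 hp1]] := IH t l1 x' (ord_pred j) ltac:(lia) hx' ht hD' hV'.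
    rewrite col_predK in hv2.
    have hH1 : HD l j \in t1.
      apply: (hp1 _ hH); last by mt.
      by apply: (@neq_meets _ _ l); mt.
    have hW1 : VD l1 x' (col_next j) \in t1.
      apply: (hp1 _ hD); last by mt.
      apply/negP => /eqP e.
      have : (x', col_next j) \in VD l1 x' (col_next j) by mem.
      rewrite e; mem.
    have [t2 r2 [ht2 hw1 hw2 hp2]] := finish hl hx' ht1 hH1 hv2 hW1.
    exists t2; first exact: rt_trans r1 r2.
    split => // D hDt hne hm.
    apply: hp2 => //; apply: hp1 => //.
    * by apply: neq_meets hm _; mt.
    * by apply: (meets_mono hm); rewrite hl.
  +
    have ex : x'' = x' by apply: val_inj => /=; lia.
    subst x'' D'.
    exact: finish hl hx' ht hH hD' hD.
  +
    have ex : x'' = l by apply: val_inj => /=; lia.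
    subst x'' D'.
    exfalso; apply: (clash (p := (l, j)) (q := (l1, j)) ht hD' hH).
    * mem.
    * mem.
    * done.
    * mem.
- have ex : x' = l by apply: val_inj => /=; lia.
  subst x' D.
  exfalso; apply: (clash (p := (l, col_next j)) (q := (l1, col_next j)) ht hD hH).
  * mem.
  * mem.
  * done.
  * mem.
Qed.

Lemma even_eq (a b z : nat) : ~~ odd a -> ~~ odd b -> (z = a \/ z = a.+1) ->
  (z = b \/ z = b.+1) -> a = b.
Proof.
move=> ha hb; move: (odd_double_half a) (odd_double_half b).
rewrite (negbTE ha) (negbTE hb) -!muln2 /= => ea eb; lia.
Qed.

Lemma even_succ (x : nat) : ~~ odd x -> x < r -> x.+1 < r.
Proof.
move=> hx hr; rewrite ltn_neqAle hr andbT; apply/negP => /eqP e.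
by move: hreven; rewrite -e /= hx.
Qed.

Definition isT0 (D : {set sq}) : bool := [exists x : 'I_r, exists x' : 'I_r, exists y : 'I_c,
  [&& ~~ odd x, (x' : nat) == x.+1 & D == VD x x' y]].
Definition T0 : tl := [set D | isT0 D].

Lemma T0P (D : {set sq}) : reflect (exists (x x' : 'I_r) (y : 'I_c), [/\ ~~ odd (x : nat), (x' : nat) = x.+1 & D = VD x x' y]) (D \in T0).
Proof.
rewrite inE; apply: (iffP existsP) => [[x /existsP [x' /existsP [y /and3P [h1 /eqP h2 /eqP h3]]]]|[x [x' [y [h1 h2 h3]]]]].
- by exists x, x', y.
- by exists x; apply/existsP; exists x'; apply/existsP; exists y; rewrite h1 h2 h3 !eqxx.
Qed.

Lemma T0_tiling : tiling T0.
Proof.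
apply: mk_tiling.
- by move=> D /T0P [x [x' [y [_ h ->]]]]; apply: domVD.
- move=> [x y]; case: (boolP (odd x)) => hx.
  + have h0 : 0 < x by case: (x : nat) hx.
    have hl : x.-1 < r by have := ltn_ord x; lia.
    exists (VD (Ordinal hl) x y); last by rewrite /VD !inE eqxx orbT.
    apply/T0P; exists (Ordinal hl), x, y; split => //=; last lia.
    by move: hx; case: (x : nat) h0.
  + have hl : x.+1 < r by apply: even_succ.
    exists (VD x (Ordinal hl) y); last by rewrite /VD !inE eqxx.
    by apply/T0P; exists x, (Ordinal hl), y.
- move=> D1 D2 [x y] /T0P [x1 [x1' [y1 [o1 e1 ->]]]] /T0P [x2 [x2' [y2 [o2 e2 ->]]]].
  rewrite /VD !inE !xpair_eqE !ord_eqE => /orP [] /andP [/eqP a1 /eqP b1] /orP [] /andP [/eqP a2 /eqP b2];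
  (have ex : x1 = x2 :> nat by apply: (even_eq (z := x)) => //; lia);
  (have ex' : x1' = x2' by apply: val_inj => /=; lia);
  (have ex1 : x1 = x2 by apply: val_inj);
  (have ey : y1 = y2 by apply: val_inj => /=; lia);
  by subst.
Qed.

Definition lowT0 (i : nat) (t : tl) := forall D, D \in T0 -> (forall s, s \in D -> (s.1 : nat) < i) -> D \in t.

Lemma T0_unique (t : tl) : tiling t -> lowT0 r t -> t = T0.
Proof.
move=> ht hl; apply/setP => D; apply/idP/idP => hD.
- have [a [b [_ e]]] := tile_dom ht hD.
  have [E hE aE] := tile_cover a T0_tiling.
  have hEt : E \in t by apply: hl => // s _; exact: ltn_ord.
  by rewrite (tile_uniq ht hD hEt (s := a)) // e set21.
- by apply: hl => // s _; exact: ltn_ord.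
Qed.

Lemma hsq_cases (t : tl) (i : nat) (io i1 : 'I_r) (y : 'I_c) : (io : nat) = i ->
  (i1 : nat) = i.+1 -> ~~ odd i -> tiling t -> lowT0 i t -> VD io i1 y \notin t ->
  HD io y \in t \/ HD io (ord_pred y) \in t.
Proof.
move=> hio hi1 hev ht hl hy.
have [D hD [hs hc]] := cover_cases io y ht.
case: hc => [e|[e|[[x' [hx' e]]|[x' [hx' e]]]]].
- by left; rewrite -e.
- by right; rewrite -e.
- have ex : x' = i1 by apply: val_inj => /=; lia.
  by subst; rewrite hD in hy.
- have hi2 : i.-2 < r by have := ltn_ord io; lia.
  set x'' := Ordinal hi2.
  have hE : VD x'' x' y \in t.
    apply: hl.
    + apply/T0P; exists x'', x', y; split => //=; last lia.
      have h2 : 2 <= i by move: hev; rewrite -hio -hx'; case: (x' : nat) => [|[|]].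
      by rewrite -subn2 oddB // (negbTE hev).
    + by move=> s; rewrite !inE => /orP [] /eqP -> /=; lia.
  exfalso; apply: (clash (p := (x', y)) (q := (io, y)) ht hD hE).
  + by rewrite e !inE eqxx.
  + by rewrite !inE eqxx orbT.
  + done.
  + rewrite !inE !xpair_eqE !ord_eqE /=; junk; lia.
Qed.

Lemma find_config (t : tl) (i : nat) (io i1 : 'I_r) (y0 : 'I_c) : (io : nat) = i ->
  (i1 : nat) = i.+1 -> ~~ odd i -> tiling t -> lowT0 i t -> VD io i1 y0 \notin t ->
  exists j, HD io j \in t /\ VD io i1 (col_next (col_next j)) \in t.
Proof.
move=> hio hi1 hev ht hl hy0.
case: (boolP [exists j, (HD io j \in t) && (VD io i1 (col_next (col_next j)) \in t)]) =>
  [/existsP [j /andP [h1 h2]]|hno]; first by exists j.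
exfalso.
have nc j : HD io j \in t -> VD io i1 (col_next (col_next j)) \notin t.
  by move=> h; apply/negP => h'; move/negP: hno; apply; apply/existsP; exists j; rewrite h h'.
have step y : VD io i1 y \notin t -> VD io i1 (col_next y) \notin t.
  move=> hy; case: (hsq_cases hio hi1 hev ht hl hy) => h.
  - apply: (notin_overlap (s := (io, col_next y)) (s' := (i1, col_next y)) ht h).
    + by rewrite !inE eqxx orbT.
    + by rewrite !inE eqxx.
    + by rewrite !inE eqxx orbT.
    + rewrite !inE !xpair_eqE !ord_eqE /=; junk; lia.
  - by have := nc _ h; rewrite col_predK.
have iterv k : (iter k (@col_next c) y0 : nat) = (y0 + k) %% c.
  elim: k => [|k IHk]; first by rewrite addn0 modn_small.
  rewrite iterS /col_next /ordS /= -/(col_next _) IHk.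
  by rewrite -addn1 modnDml -addnA addn1.
have allh k : VD io i1 (iter k (@col_next c) y0) \notin t.
  by elim: k => // k IHk; rewrite iterS; apply: step.
have hall y : VD io i1 y \notin t.
  have -> : y = iter (y + c - y0) (@col_next c) y0.
    apply: val_inj => /=; rewrite iterv.
    have -> : y0 + (y + c - y0) = y + c by have := ltn_ord y0; lia.
    by rewrite modnDr modn_small.
  exact: allh.
have alt y : (HD io (col_next y) \in t) = ~~ (HD io y \in t).
  case: (boolP (HD io y \in t)) => h.
  - apply/negbTE; apply: (notin_overlap (s := (io, col_next y)) (s' := (io, col_next (col_next y))) ht h).
    + by rewrite !inE eqxx orbT.
    + by rewrite !inE eqxx.
    + by rewrite !inE eqxx orbT.
    + have := ltn_ord y; norm; junk; cases; lia.
  - case: (hsq_cases hio hi1 hev ht hl (hall (col_next y))) => // h'.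
    by rewrite col_nextK in h'; rewrite h' in h.
have fk k : (HD io (iter k (@col_next c) y0) \in t) = (HD io y0 \in t) (+) odd k.
  elim: k => [|k IHk]; first by rewrite addbF.
  by rewrite iterS alt IHk oddS addbN.
have e : iter c (@col_next c) y0 = y0.
  by apply: val_inj; rewrite /= iterv modnDr modn_small.
by have := fk c; rewrite e hcodd addbT; case: (HD io y0 \in t).
Qed.

Lemma to_T0 (k : nat) : forall (i : nat) (t : tl), r - i <= k -> ~~ odd i -> i <= r ->
  tiling t -> lowT0 i t -> reach t T0.
Proof.
elim: k => [|k IHk] i t hk hev hir ht hl.
  have ei : i = r by lia.
  by subst; rewrite (T0_unique ht hl); exact: rt_refl.
case: (eqVneq i r) => [ei|nei].
  by subst; rewrite (T0_unique ht hl); exact: rt_refl.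
have hi : i < r by rewrite ltn_neqAle nei hir.
have hi1 : i.+1 < r := even_succ hev hi.
set io := Ordinal hi; set i1 := Ordinal hi1.
have fin (t' : tl) : tiling t' -> lowT0 i t' -> ~~ [exists y, VD io i1 y \notin t'] -> reach t' T0.
  move=> ht' hl' hall.
  apply: (IHk i.+2) => //; first lia; first by rewrite !oddS negbK.
  move=> D hD hrows; have [x [x' [y [hx hx' eD]]]] := T0P _ hD.
  case: (ltnP x i) => hxi.
  - have hx1 : x.+1 < i.
      rewrite ltn_neqAle hxi andbT; apply/negP => /eqP e.
      by move: hev; rewrite -e /= hx.
    apply: hl' => // s; rewrite eD !inE => /orP [] /eqP -> /=; lia.
  - have := hrows (x', y); rewrite eD !inE eqxx orbT => /(_ isT) /= hx'i.
    have ex : x = io by apply: val_inj => /=; lia.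
    have ex' : x' = i1 by apply: val_inj => /=; lia.
    subst.
    by move/existsPn: hall => /(_ y); rewrite negbK.
suff main : forall N (t' : tl), #|[set y | VD io i1 y \notin t']| <= N -> tiling t' ->
    lowT0 i t' -> reach t' T0 by exact: (main _ t (leqnn _)).
elim=> [|N IHN] t' hN ht' hl';
  (case: (boolP [exists y, VD io i1 y \notin t']) => [/existsP [y0 hy0]|hall]; last exact: fin).
  have : 0 < #|[set y | VD io i1 y \notin t']| by apply/card_gt0P; exists y0; rewrite inE.
  by rewrite leqn0 in hN; rewrite (eqP hN).
have [j [hH hV]] := find_config (io := io) (i1 := i1) erefl erefl hev ht' hl' hy0.
have [t2 r2 [ht2 hv1 hv2 hp]] := proc (k := r) (l := io) (l1 := i1) (j := j) (leq_subr _ _) erefl ht' hH hV.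
have hl2 : lowT0 i t2.
  move=> D hD hrows; have [x [x' [y [hx hx' eD]]]] := T0P _ hD.
  have hxi : x < i by have := hrows (x, y); rewrite eD /VD set21 => /(_ isT).
  apply: hp; first exact: hl'.
  - apply/negP => /eqP e; have := hrows (io, j); rewrite e /HD set21 => /(_ isT) /=.
    by rewrite ltnn.
  - by rewrite eD /VD meets2 /= ltnW.
have sub : [set y | VD io i1 y \notin t2] \proper [set y | VD io i1 y \notin t'].
  apply/properP; split.
  - apply/subsetP => y; rewrite !inE; apply: contra => hy.
    apply: hp hy _ _; last by rewrite /VD meets2 /= leqnn.
    apply/negP => /eqP e; have : (i1, y) \in VD io i1 y by rewrite /VD set22.
    rewrite e /HD !inE !xpair_eqE !ord_eqE /=; junk; lia.
  - exists j; rewrite !inE ?hv1 //.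
    apply: (notin_overlap (s := (io, j)) (s' := (i1, j)) ht' hH).
    + by rewrite /HD set21.
    + by rewrite /VD set21.
    + by rewrite /VD set22.
    + rewrite /HD !inE !xpair_eqE !ord_eqE /=; junk; lia.
apply: rt_trans r2 (IHN t2 _ ht2 hl2).
by have := proper_card sub; lia.
Qed.

End Cyl.
Theorem corollary3p5 (n m : nat) :
  1 <= n -> 1 <= m -> flip_graph_connected (2 * m) (2 * n + 1).
Proof.
move=> hn hm.
have hc3 : 2 < 2 * n + 1 by lia.
have hco : odd (2 * n + 1) by rewrite oddD oddM.
have hre : ~~ odd (2 * m) by rewrite oddM.
have low0 (t : {set {set square (2 * m) (2 * n + 1)}}) : lowT0 0 t.
  move=> D hD hrows; have [x [x' [y [_ _ eD]]]] := T0P _ hD.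
  by have := hrows (x, y); rewrite eD /VD set21 => /(_ isT).
have toT (t : {set {set square (2 * m) (2 * n + 1)}}) : tiling t -> reach t (T0 (2 * m) (2 * n + 1)).
  move=> ht; apply: (to_T0 hc3 hco hre (k := 2 * m) (i := 0)) => //; first by rewrite subn0.
split; first by exists (T0 (2 * m) (2 * n + 1)); exact: T0_tiling.
move=> t1 t2 h1 h2.
exact: rt_trans (toT _ h1) (reach_sym hc3 hco hre (toT _ h2)).
Qed.
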